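(* Let $f\colon M\to\mathbb H$ be a minimal conformal immersion with right normal $R$, and let $d^S_\lambda$ be the associated family of connections of its conformal Gauss map. For $\mu\in\mathbb C\setminus\{0,1\}$, a section $\varphi\colon\tilde M\to\mathbb H^2$ is $d^S_\mu$-parallel if and only if either $\varphi=en$ for a constant $n\in\mathbb H$, or $\varphi=e\alpha+\psi\beta$ with $$\alpha=-f^*m-fm\,\frac{i(1+\mu)}{1-\mu},\qquad \beta=Rm+m\,\frac{i(1+\mu)}{1-\mu}$$ for some $m\in\mathbb H_*$ and some conjugate surface $f^*$ of $f$.
   Context: Quaternions $\mathbb H$, $\mathbb H_*=\mathbb H\setminus\{0\}$, $\mathbb C=\operatorname{span}_{\mathbb R}\{1,i\}\subset\mathbb H$. $M$ Riemann surface, $\tilde M$ its universal cover, $*\omega(X)=\omega(JX)$. Normals: $*df=N\,df=-df\,R$. A conjugate surface $f^*\colon\tilde M\to\mathbb H$ satisfies $df^*=-*df$. On $\tilde M\times\mathbb H^2$ (quaternionic right module, complex structure $I$ = right multiplication by $i$) let $e=(1,0)^t$, $\psi=(f,1)^t$, $G=\begin{pmatrix}1&f\\0&1\end{pmatrix}$. For minimal $f$ the Hopf field $A$ of the conformal Gauss map is the $\operatorname{End}(\mathbb H^2)$-valued 1-form with $2*A=G\begin{pmatrix}0&0\\0&dR\end{pmatrix}G^{-1}$. Put $A^{(1,0)}\varphi=\tfrac12(A\varphi-( *A\varphi)i)$, $A^{(0,1)}\varphi=\tfrac12(A\varphi+( *A\varphi)i)$ and $d^S_\lambda=d+(\lambda-1)A^{(1,0)}+(\lambda^{-1}-1)A^{(0,1)}$,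 $\lambda\in\mathbb C_*$. *)

(* Defs.v *)
From Stdlib Require Import Reals List ClassicalEpsilon.
Open Scope R_scope.

Record H := mkH { h0 : R; h1 : R; h2 : R; h3 : R }.

Definition hzero : H := mkH 0 0 0 0.
Definition hone : H := mkH 1 0 0 0.
Definition hi : H := mkH 0 1 0 0.
Definition hadd (a b : H) : H :=
  mkH (h0 a + h0 b) (h1 a + h1 b) (h2 a + h2 b) (h3 a + h3 b).
Definition hopp (a : H) : H := mkH (- h0 a) (- h1 a) (- h2 a) (- h3 a).
Definition hsub (a b : H) : H := hadd a (hopp b).
Definition hscal (r : R) (a : H) : H := mkH (r * h0 a) (r * h1 a) (r * h2 a) (r * h3 a).
Definition hmul (a b : H) : H :=
  mkH (h0 a * h0 b - h1 a * h1 b - h2 a * h2 b - h3 a * h3 b)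
      (h0 a * h1 b + h1 a * h0 b + h2 a * h3 b - h3 a * h2 b)
      (h0 a * h2 b - h1 a * h3 b + h2 a * h0 b + h3 a * h1 b)
      (h0 a * h3 b + h1 a * h2 b - h2 a * h1 b + h3 a * h0 b).
Definition hconj (a : H) : H := mkH (h0 a) (- h1 a) (- h2 a) (- h3 a).
Definition hnorm2 (a : H) : R := h0 a * h0 a + h1 a * h1 a + h2 a * h2 a + h3 a * h3 a.
(* inverse a^{-1} = conj(a)/|a|^2 (meaningful for a <> 0) *)
Definition hinv (a : H) : H := hscal (/ hnorm2 a) (hconj a).
Definition hdot (a b : H) : R := h0 a * h0 b + h1 a * h1 b + h2 a * h2 b + h3 a * h3 b.

Definition is_complex (z : H) : Prop := h2 z = 0 /\ h3 z = 0.

Definition open2 (U : R -> R -> Prop) : Prop :=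
  forall x y, U x y -> exists r, 0 < r /\
    forall x' y', Rabs (x' - x) < r -> Rabs (y' - y) < r -> U x' y'.

Definition connected2 (U : R -> R -> Prop) : Prop :=
  forall V W : R -> R -> Prop, open2 V -> open2 W ->
    (forall x y, U x y -> V x y \/ W x y) ->
    (forall x y, U x y -> ~ (V x y /\ W x y)) ->
    (forall x y, U x y -> V x y) \/ (forall x y, U x y -> W x y).

Definition is_dx (g : R -> R -> R) (x y v : R) : Prop :=
  derivable_pt_lim (fun t => g t y) x v.
Definition is_dy (g : R -> R -> R) (x y v : R) : Prop :=
  derivable_pt_lim (fun t => g x t) y v.

(* the partial derivative (value chosen by Hilbert's epsilon; it is the
   derivative whenever it exists, which is always the case below) *)
Definition dx (g : R -> R -> R) (x y : R) : R :=
  epsilon (inhabits 0) (fun v => is_dx g x y v).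
Definition dy (g : R -> R -> R) (x y : R) : R :=
  epsilon (inhabits 0) (fun v => is_dy g x y v).

Definition continuous2_on (U : R -> R -> Prop) (g : R -> R -> R) : Prop :=
  forall x y, U x y -> forall eps, 0 < eps -> exists delta, 0 < delta /\
    forall x' y', U x' y' -> Rabs (x' - x) < delta -> Rabs (y' - y) < delta ->
      Rabs (g x' y' - g x y) < eps.

(* D w is the iterated partial derivative along the word w
   (false = d/dx, true = d/dy, the head letter being applied last). *)
Definition smooth_on (U : R -> R -> Prop) (g : R -> R -> R) : Prop :=
  exists D : list bool -> R -> R -> R,
    D nil = g /\
    forall w, continuous2_on U (D w) /\
      forall x y, U x y ->
        is_dx (D w) x y (D (false :: w) x y) /\ is_dy (D w) x y (D (true :: w) x y).

Definition Hsmooth_on (U : R -> R -> Prop) (F : R -> R -> H) : Prop :=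
  smooth_on U (fun x y => h0 (F x y)) /\ smooth_on U (fun x y => h1 (F x y)) /\
  smooth_on U (fun x y => h2 (F x y)) /\ smooth_on U (fun x y => h3 (F x y)).

Definition Hdx (F : R -> R -> H) (x y : R) : H :=
  mkH (dx (fun a b => h0 (F a b)) x y) (dx (fun a b => h1 (F a b)) x y)
      (dx (fun a b => h2 (F a b)) x y) (dx (fun a b => h3 (F a b)) x y).
Definition Hdy (F : R -> R -> H) (x y : R) : H :=
  mkH (dy (fun a b => h0 (F a b)) x y) (dy (fun a b => h1 (F a b)) x y)
      (dy (fun a b => h2 (F a b)) x y) (dy (fun a b => h3 (F a b)) x y).

Definition is_Hdx (F : R -> R -> H) (x y : R) (v : H) : Prop :=
  is_dx (fun a b => h0 (F a b)) x y (h0 v) /\ is_dx (fun a b => h1 (F a b)) x y (h1 v) /\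
  is_dx (fun a b => h2 (F a b)) x y (h2 v) /\ is_dx (fun a b => h3 (F a b)) x y (h3 v).
Definition is_Hdy (F : R -> R -> H) (x y : R) (v : H) : Prop :=
  is_dy (fun a b => h0 (F a b)) x y (h0 v) /\ is_dy (fun a b => h1 (F a b)) x y (h1 v) /\
  is_dy (fun a b => h2 (F a b)) x y (h2 v) /\ is_dy (fun a b => h3 (F a b)) x y (h3 v).

(* differential of F applied to the tangent vector X = a d/dx + b d/dy *)
Definition Hd (F : R -> R -> H) (x y a b : R) : H :=
  hadd (hscal a (Hdx F x y)) (hscal b (Hdy F x y)).

Definition conformal_immersion (U : R -> R -> Prop) (f : R -> R -> H) : Prop :=
  Hsmooth_on U f /\
  forall x y, U x y ->
    Hdx f x y <> hzero /\
    hnorm2 (Hdx f x y) = hnorm2 (Hdy f x y) /\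
    hdot (Hdx f x y) (Hdy f x y) = 0.

(* R is the right normal:  *df = - df R, where ( *omega)(X) = omega(JX) and
   J d/dx = d/dy, so for X = a d/dx + b d/dy we have JX = -b d/dx + a d/dy *)
Definition right_normal (U : R -> R -> Prop) (f Rn : R -> R -> H) : Prop :=
  forall x y, U x y -> forall a b,
    Hd f x y (- b) a = hopp (hmul (Hd f x y a b) (Rn x y)).

(* minimal: in a conformal coordinate, f is harmonic *)
Definition minimal (U : R -> R -> Prop) (f : R -> R -> H) : Prop :=
  forall x y, U x y -> hadd (Hdx (Hdx f) x y) (Hdy (Hdy f) x y) = hzero.

(* conjugate surface:  df* = - *df *)
Definition conjugate_surface (U : R -> R -> Prop) (f fs : R -> R -> H) : Prop :=
  forall x y, U x y ->
    (exists vx vy, is_Hdx fs x y vx /\ is_Hdy fs x y vy) /\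
    forall a b, Hd fs x y a b = hopp (Hd f x y (- b) a).

Definition H2 : Type := (H * H)%type.
Definition v_add (v w : H2) : H2 := (hadd (fst v) (fst w), hadd (snd v) (snd w)).
Definition v_opp (v : H2) : H2 := (hopp (fst v), hopp (snd v)).
Definition v_rmul (v : H2) (q : H) : H2 := (hmul (fst v) q, hmul (snd v) q).
Definition v_scal (r : R) (v : H2) : H2 := (hscal r (fst v), hscal r (snd v)).
Definition v_zero : H2 := (hzero, hzero).

Record M2 := mkM2 { m11 : H; m12 : H; m21 : H; m22 : H }.
Definition m_app (A : M2) (v : H2) : H2 :=
  (hadd (hmul (m11 A) (fst v)) (hmul (m12 A) (snd v)),
   hadd (hmul (m21 A) (fst v)) (hmul (m22 A) (snd v))).
Definition m_mul (A B : M2) : M2 :=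
  mkM2 (hadd (hmul (m11 A) (m11 B)) (hmul (m12 A) (m21 B)))
       (hadd (hmul (m11 A) (m12 B)) (hmul (m12 A) (m22 B)))
       (hadd (hmul (m21 A) (m11 B)) (hmul (m22 A) (m21 B)))
       (hadd (hmul (m21 A) (m12 B)) (hmul (m22 A) (m22 B))).
Definition m_scal (r : R) (A : M2) : M2 :=
  mkM2 (hscal r (m11 A)) (hscal r (m12 A)) (hscal r (m21 A)) (hscal r (m22 A)).
Definition m_opp (A : M2) : M2 := m_scal (-1) A.

Definition e_vec : H2 := (hone, hzero).
Definition psi_vec (f : R -> R -> H) (x y : R) : H2 := (f x y, hone).
Definition Gm (f : R -> R -> H) (x y : R) : M2 := mkM2 hone (f x y) hzero hone.
Definition Ginv (f : R -> R -> H) (x y : R) : M2 := mkM2 hone (hopp (f x y)) hzero hone.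

(* Hopf field: 2 *A = G diag(0, dR) G^{-1}, evaluated on X = a d/dx + b d/dy *)
Definition starA (f Rn : R -> R -> H) (x y a b : R) : M2 :=
  m_scal (/ 2) (m_mul (Gm f x y)
    (m_mul (mkM2 hzero hzero hzero (Hd Rn x y a b)) (Ginv f x y))).
(* A(X) = - ( *A)(JX)  (since ** = -1), JX = -b d/dx + a d/dy *)
Definition hopfA (f Rn : R -> R -> H) (x y a b : R) : M2 :=
  m_opp (starA f Rn x y (- b) a).

Definition A10 (f Rn : R -> R -> H) (x y a b : R) (v : H2) : H2 :=
  v_scal (/ 2) (v_add (m_app (hopfA f Rn x y a b) v)
                      (v_opp (v_rmul (m_app (starA f Rn x y a b) v) hi))).
Definition A01 (f Rn : R -> R -> H) (x y a b : R) (v : H2) : H2 :=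
  v_scal (/ 2) (v_add (m_app (hopfA f Rn x y a b) v)
                      (v_rmul (m_app (starA f Rn x y a b) v) hi)).

Definition dphi (phi : R -> R -> H2) (x y a b : R) : H2 :=
  (Hd (fun s t => fst (phi s t)) x y a b, Hd (fun s t => snd (phi s t)) x y a b).

(* d^S_lambda = d + (lambda-1) A^{(1,0)} + (lambda^{-1}-1) A^{(0,1)}; complex scalars
   act through the complex structure I = right multiplication by i, i.e. by
   right multiplication. *)
Definition dS (f Rn : R -> R -> H) (lam : H) (phi : R -> R -> H2) (x y a b : R) : H2 :=
  v_add (dphi phi x y a b)
    (v_add (v_rmul (A10 f Rn x y a b (phi x y)) (hsub lam hone))
           (v_rmul (A01 f Rn x y a b (phi x y)) (hsub (hinv lam) hone))).

Definition section_smooth (U : R -> R -> Prop) (phi : R -> R -> H2) : Prop :=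
  Hsmooth_on U (fun x y => fst (phi x y)) /\ Hsmooth_on U (fun x y => snd (phi x y)).

Definition parallel (U : R -> R -> Prop) (f Rn : R -> R -> H) (lam : H)
  (phi : R -> R -> H2) : Prop :=
  forall x y, U x y -> forall a b, dS f Rn lam phi x y a b = v_zero.

(* Main.v *)
Require Import Defs.
From Stdlib Require Import Reals Lra ClassicalEpsilon Classical List.
From Coquelicot Require Coquelicot.
Open Scope R_scope.

Lemma H_ext (a b : H) : h0 a = h0 b -> h1 a = h1 b -> h2 a = h2 b -> h3 a = h3 b -> a = b.
Proof. destruct a, b; simpl; intros; subst; reflexivity. Qed.

Ltac hunf := unfold hsub, hadd, hopp, hscal, hmul, hconj, hinv, hnorm2, hzero, hone, hi in *.
Ltac hcbn := cbn [h0 h1 h2 h3 hmul hadd hsub hopp hscal hconj hzero hone hi hinv hnorm2].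
Ltac hdes := repeat match goal with x : H |- _ =>
  let a := fresh "q" in let b := fresh "q" in let c := fresh "q" in let d := fresh "q" in
  destruct x as [a b c d] end.
Ltac hring := intros; hdes; apply H_ext; hcbn; first [ring | field].

Lemma hmul_assoc a b c : hmul a (hmul b c) = hmul (hmul a b) c. Proof. hring. Qed.
Lemma hmul_0l a : hmul hzero a = hzero. Proof. hring. Qed.
Lemma hmul_0r a : hmul a hzero = hzero. Proof. hring. Qed.
Lemma hmul_1l a : hmul hone a = a. Proof. hring. Qed.
Lemma hmul_1r a : hmul a hone = a. Proof. hring. Qed.
Lemma hadd_0r a : hadd a hzero = a. Proof. hring. Qed.
Lemma hadd_0l a : hadd hzero a = a. Proof. hring. Qed.
Lemma hscal_0r r : hscal r hzero = hzero. Proof. hring. Qed.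

Lemma hnorm2_pos a : a <> hzero -> hnorm2 a <> 0.
Proof.
  intros Ha E. apply Ha. destruct a as [a0 a1 a2 a3]. unfold hnorm2 in E; simpl in E.
  assert (a0 = 0) by nra. assert (a1 = 0) by nra. assert (a2 = 0) by nra.
  assert (a3 = 0) by nra. subst. reflexivity.
Qed.

Lemma hinv_l a : a <> hzero -> hmul (hinv a) a = hone.
Proof.
  intros Ha. pose proof (hnorm2_pos a Ha) as N. destruct a as [a0 a1 a2 a3].
  unfold hnorm2 in N; simpl in N. hunf. apply H_ext; simpl; field; auto.
Qed.
Lemma hinv_r a : a <> hzero -> hmul a (hinv a) = hone.
Proof.
  intros Ha. pose proof (hnorm2_pos a Ha) as N. destruct a as [a0 a1 a2 a3].
  unfold hnorm2 in N; simpl in N. hunf. apply H_ext; simpl; field; auto.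
Qed.

Definition Dl := derivable_pt_lim.
Lemma dl_eqv f x l l' : derivable_pt_lim f x l' -> l' = l -> derivable_pt_lim f x l.
Proof. intros; subst; auto. Qed.
Lemma dl_add f g x a b : derivable_pt_lim f x a -> derivable_pt_lim g x b ->
  derivable_pt_lim (fun t => f t + g t) x (a + b).
Proof. intros; apply (derivable_pt_lim_plus f g); auto. Qed.
Lemma dl_sub f g x a b : derivable_pt_lim f x a -> derivable_pt_lim g x b ->
  derivable_pt_lim (fun t => f t - g t) x (a - b).
Proof. intros; apply (derivable_pt_lim_minus f g); auto. Qed.
Lemma dl_mul f g x a b : derivable_pt_lim f x a -> derivable_pt_lim g x b ->
  derivable_pt_lim (fun t => f t * g t) x (a * g x + f x * b).
Proof. intros; apply (derivable_pt_lim_mult f g); auto. Qed.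
Lemma dl_opp f x a : derivable_pt_lim f x a -> derivable_pt_lim (fun t => - f t) x (- a).
Proof. intros; apply (derivable_pt_lim_opp f); auto. Qed.
Lemma dl_const c x : derivable_pt_lim (fun _ => c) x 0.
Proof. apply derivable_pt_lim_const. Qed.
Ltac dtac := repeat first [ apply dl_add | apply dl_sub | apply dl_mul | apply dl_opp
   | apply dl_const | eassumption ].

Lemma dl_loc f g x l d : 0 < d -> (forall t, Rabs (t - x) < d -> f t = g t) ->
  derivable_pt_lim f x l -> derivable_pt_lim g x l.
Proof.
  intros Hd E D eps Heps. destruct (D eps Heps) as [del Hdel].
  assert (Hm : 0 < Rmin del d) by (apply Rmin_pos; [apply cond_pos | auto]).
  exists (mkposreal _ Hm). intros h hn hl. simpl in hl.
  rewrite <- (E (x + h)), <- (E x).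
  apply Hdel; auto. apply Rlt_le_trans with (1 := hl). apply Rmin_l.
  replace (x - x) with 0 by ring. rewrite Rabs_R0; auto.
  replace (x + h - x) with h by ring. apply Rlt_le_trans with (1 := hl). apply Rmin_r.
Qed.

Lemma dl_inv f x a : derivable_pt_lim f x a -> f x <> 0 ->
  derivable_pt_lim (fun t => / f t) x (- a / (f x)^2).
Proof.
  intros D N. eapply dl_eqv. eapply (dl_loc _ _ x _ 1). lra.
  2: apply (derivable_pt_lim_div (fun _ => 1) f x 0 a); auto; apply dl_const.
  intros; unfold div_fct, Rdiv; ring.
  unfold Rsqr; simpl; field; auto.
Qed.
Definition HD (F : R -> H) (t : R) (v : H) : Prop :=
  derivable_pt_lim (fun s => h0 (F s)) t (h0 v) /\
  derivable_pt_lim (fun s => h1 (F s)) t (h1 v) /\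
  derivable_pt_lim (fun s => h2 (F s)) t (h2 v) /\
  derivable_pt_lim (fun s => h3 (F s)) t (h3 v).

Ltac hdtac := repeat split; (eapply dl_eqv; [ dtac | hunf; simpl; ring ]).
Ltac hdpre := intros; repeat match goal with H : HD _ _ _ |- _ =>
  let a := fresh in let b := fresh in let c := fresh in let d := fresh in
  destruct H as (a & b & c & d) end; unfold HD; hunf; simpl.

Lemma HD_add F G t a b : HD F t a -> HD G t b -> HD (fun s => hadd (F s) (G s)) t (hadd a b).
Proof. hdpre; hdtac. Qed.
Lemma HD_sub F G t a b : HD F t a -> HD G t b -> HD (fun s => hsub (F s) (G s)) t (hsub a b).
Proof. hdpre; hdtac. Qed.
Lemma HD_opp F t a : HD F t a -> HD (fun s => hopp (F s)) t (hopp a).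
Proof. hdpre; hdtac. Qed.
Lemma HD_scal F t a r : HD F t a -> HD (fun s => hscal r (F s)) t (hscal r a).
Proof. hdpre; repeat split; (eapply dl_eqv; [ dtac | cbv beta; ring ]). Qed.
Lemma HD_mul F G t a b : HD F t a -> HD G t b ->
  HD (fun s => hmul (F s) (G s)) t (hadd (hmul a (G t)) (hmul (F t) b)).
Proof. hdpre; hdtac. Qed.
Lemma HD_const c t : HD (fun _ => c) t hzero.
Proof. unfold HD; simpl; repeat split; apply dl_const. Qed.
Lemma HD_mulr F t a c : HD F t a -> HD (fun s => hmul (F s) c) t (hmul a c).
Proof. intros D. pose proof (HD_mul _ _ t _ _ D (HD_const c t)). 
  replace (hmul a c) with (hadd (hmul a c) (hmul (F t) hzero)) by (rewrite hmul_0r, hadd_0r; auto). auto. Qed.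
Lemma HD_mull F t a c : HD F t a -> HD (fun s => hmul c (F s)) t (hmul c a).
Proof. intros D. pose proof (HD_mul _ _ t _ _ (HD_const c t) D).
  replace (hmul c a) with (hadd (hmul hzero (F t)) (hmul c a)) by (rewrite hmul_0l, hadd_0l; auto). auto. Qed.
Lemma HD_inv F t a : HD F t a -> hnorm2 (F t) <> 0 -> exists w, HD (fun s => hinv (F s)) t w.
Proof.
  intros D N. destruct D as (d0 & d1 & d2 & d3).
  assert (Dn : derivable_pt_lim (fun s => hnorm2 (F s)) t
     (h0 a * h0 (F t) + h0 (F t) * h0 a + (h1 a * h1 (F t) + h1 (F t) * h1 a)
      + (h2 a * h2 (F t) + h2 (F t) * h2 a) + (h3 a * h3 (F t) + h3 (F t) * h3 a))).
  { unfold hnorm2. dtac. }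
  pose proof (dl_inv _ _ _ Dn N) as Di.
  cbv beta in Di. refine (ex_intro _ (mkH _ _ _ _) _). unfold HD, hinv, hscal, hconj; simpl. repeat split; dtac.
Qed.
Lemma HD_unique F t a b : HD F t a -> HD F t b -> a = b.
Proof.
  intros (a0 & a1 & a2 & a3) (b0 & b1 & b2 & b3). apply H_ext;
  eapply uniqueness_limite; eauto.
Qed.
Lemma HD_loc F G t v d : 0 < d -> (forall s, Rabs (s - t) < d -> F s = G s) -> HD F t v -> HD G t v.
Proof.
  intros Hd E (a0 & a1 & a2 & a3). repeat split; eapply dl_loc; eauto;
  intros s Hs; cbv beta; rewrite E; auto.
Qed.

Lemma HD_eqv F t a b : HD F t a -> a = b -> HD F t b.
Proof. intros; subst; auto. Qed.
Lemma HD_mulE F G t a b v : HD F t a -> HD G t b -> v = hadd (hmul a (G t)) (hmul (F t) b) ->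
  HD (fun s => hmul (F s) (G s)) t v.
Proof. intros; subst; apply HD_mul; auto. Qed.
Lemma HD_addE F G t a b v : HD F t a -> HD G t b -> v = hadd a b -> HD (fun s => hadd (F s) (G s)) t v.
Proof. intros; subst; apply HD_add; auto. Qed.
Lemma HD_subE F G t a b v : HD F t a -> HD G t b -> v = hsub a b -> HD (fun s => hsub (F s) (G s)) t v.
Proof. intros; subst; apply HD_sub; auto. Qed.
Lemma HD_oppE F t a v : HD F t a -> v = hopp a -> HD (fun s => hopp (F s)) t v.
Proof. intros; subst; apply HD_opp; auto. Qed.
Lemma HD_constE c t v : v = hzero -> HD (fun _ => c) t v.
Proof. intros; subst; apply HD_const. Qed.

Module Bm.
Import Coquelicot.Coquelicot.

Lemma dx_spec g x y v : is_dx g x y v -> dx g x y = v.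
Proof.
  intros D. unfold dx. pose proof (epsilon_spec (inhabits 0) (fun v => is_dx g x y v)
    (ex_intro _ v D)) as E. simpl in E. eapply uniqueness_limite; eauto.
Qed.
Lemma dy_spec g x y v : is_dy g x y v -> dy g x y = v.
Proof.
  intros D. unfold dy. pose proof (epsilon_spec (inhabits 0) (fun v => is_dy g x y v)
    (ex_intro _ v D)) as E. simpl in E. eapply uniqueness_limite; eauto.
Qed.

Lemma Hdx_spec F x y v : HD (fun t => F t y) x v -> Hdx F x y = v.
Proof. intros (a&b&c&d). unfold Hdx. apply H_ext; simpl; apply dx_spec; auto. Qed.
Lemma Hdy_spec F x y v : HD (fun t => F x t) y v -> Hdy F x y = v.
Proof. intros (a&b&c&d). unfold Hdy. apply H_ext; simpl; apply dy_spec; auto. Qed.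

Lemma smooth_first U g x y : smooth_on U g -> U x y ->
  is_dx g x y (dx g x y) /\ is_dy g x y (dy g x y).
Proof.
  intros [D [D0 HD]] Hu. destruct (HD nil) as [_ H1]. destruct (H1 x y Hu) as [A B].
  rewrite D0 in A, B. rewrite (dx_spec _ _ _ _ A), (dy_spec _ _ _ _ B). auto.
Qed.

Lemma smooth_cont U g : smooth_on U g -> continuous2_on U g.
Proof. intros [D [D0 HD]]. rewrite <- D0. apply HD. Qed.

Lemma open_line U x y : open2 U -> U x y -> exists r, 0 < r /\
  (forall s, Rabs (s - x) < r -> U s y) /\ (forall s, Rabs (s - y) < r -> U x s).
Proof.
  intros Ho Hu. destruct (Ho x y Hu) as [r [Hr Hs]]. exists r; repeat split; auto;
  intros; apply Hs; auto; replace (_ - _) with 0 by ring; rewrite Rabs_R0; auto.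
Qed.

Lemma smooth_dx U g : open2 U -> smooth_on U g -> smooth_on U (dx g).
Proof.
  intros Ho Hs. pose proof Hs as [D [D0 HD]].
  assert (E : forall x y, U x y -> dx g x y = D (false :: nil) x y).
  { intros x y Hu. apply dx_spec. destruct (HD nil) as [_ H1]. rewrite <- D0. apply H1; auto. }
  exists (fun w => match w with nil => dx g | _ => D (w ++ false :: nil) end).
  split; auto. intros [|b w].
  - split.
    + intros x y Hu eps Heps. destruct (HD (false :: nil)) as [C _].
      destruct (C x y Hu eps Heps) as [d [Hd Hd']]. exists d; split; auto.
      intros; rewrite !E; auto.
    + intros x y Hu. destruct (HD (false :: nil)) as [_ H1]. destruct (H1 x y Hu) as [A B].
      destruct (open_line U x y Ho Hu) as [r [Hr [L1 L2]]]. simpl. split.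
      * eapply dl_loc; [exact Hr| |exact A]. intros; symmetry; apply E; auto.
      * eapply dl_loc; [exact Hr| |exact B]. intros; symmetry; apply E; auto.
  - simpl. exact (HD (b :: w ++ false :: nil)).
Qed.

Lemma smooth_dy U g : open2 U -> smooth_on U g -> smooth_on U (dy g).
Proof.
  intros Ho Hs. pose proof Hs as [D [D0 HD]].
  assert (E : forall x y, U x y -> dy g x y = D (true :: nil) x y).
  { intros x y Hu. apply dy_spec. destruct (HD nil) as [_ H1]. rewrite <- D0. apply H1; auto. }
  exists (fun w => match w with nil => dy g | _ => D (w ++ true :: nil) end).
  split; auto. intros [|b w].
  - split.
    + intros x y Hu eps Heps. destruct (HD (true :: nil)) as [C _].
      destruct (C x y Hu eps Heps) as [d [Hd Hd']]. exists d; split; auto.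
      intros; rewrite !E; auto.
    + intros x y Hu. destruct (HD (true :: nil)) as [_ H1]. destruct (H1 x y Hu) as [A B].
      destruct (open_line U x y Ho Hu) as [r [Hr [L1 L2]]]. simpl. split.
      * eapply dl_loc; [exact Hr| |exact A]. intros; symmetry; apply E; auto.
      * eapply dl_loc; [exact Hr| |exact B]. intros; symmetry; apply E; auto.
  - simpl. exact (HD (b :: w ++ true :: nil)).
Qed.

Lemma Derive_of f x l : derivable_pt_lim f x l -> Derive f x = l.
Proof. intros D. apply is_derive_unique. apply is_derive_Reals. auto. Qed.

Lemma smooth_schwarz U g x y : open2 U -> smooth_on U g -> U x y ->
  dx (dy g) x y = dy (dx g) x y.
Proof.
  intros Ho Hs Hu.
  pose proof (smooth_dx U g Ho Hs) as Sx. pose proof (smooth_dy U g Ho Hs) as Sy.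
  pose proof (smooth_dy U _ Ho Sx) as Syx. pose proof (smooth_dx U _ Ho Sy) as Sxy.
  destruct (Ho x y Hu) as [r [Hr Hsq]].
  assert (Hr2 : 0 < r / 2) by lra.
  assert (Ey : forall u v, Rabs (u - x) < r -> Rabs (v - y) < r ->
    Derive (fun t => g u t) v = dy g u v).
  { intros u v H1 H2. apply Derive_of. apply (smooth_first U g u v Hs); auto. }
  assert (Ex : forall u v, Rabs (u - x) < r -> Rabs (v - y) < r ->
    Derive (fun t => g t v) u = dx g u v).
  { intros u v H1 H2. apply Derive_of. apply (smooth_first U g u v Hs); auto. }
  assert (Exy : forall u v, Rabs (u - x) < r / 2 -> Rabs (v - y) < r / 2 ->
    derivable_pt_lim (fun z => Derive (fun t => g z t) v) u (dx (dy g) u v)).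
  { intros u v H1 H2. eapply (dl_loc (fun z => dy g z v) _ u _ (r/2)); auto.
    - intros s Hs'. symmetry; apply Ey.
      + replace (s - x) with ((s - u) + (u - x)) by ring.
        eapply Rle_lt_trans; [apply Rabs_triang|]. lra.
      + lra.
    - apply (smooth_first U _ u v Sy). apply Hsq; lra. }
  assert (Eyx : forall u v, Rabs (u - x) < r / 2 -> Rabs (v - y) < r / 2 ->
    derivable_pt_lim (fun z => Derive (fun t => g t z) u) v (dy (dx g) u v)).
  { intros u v H1 H2. eapply (dl_loc (fun z => dx g u z) _ v _ (r/2)); auto.
    - intros s Hs'. symmetry; apply Ex.
      + lra.
      + replace (s - y) with ((s - v) + (v - y)) by ring.
        eapply Rle_lt_trans; [apply Rabs_triang|]. lra.
    - apply (smooth_first U _ u v Sx). apply Hsq; lra. }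
  assert (S := Schwarz g x y).
  rewrite (Derive_of _ _ _ (Exy x y ltac:(rewrite Rminus_diag, Rabs_R0; lra)
                                     ltac:(rewrite Rminus_diag, Rabs_R0; lra))) in S.
  rewrite (Derive_of _ _ _ (Eyx x y ltac:(rewrite Rminus_diag, Rabs_R0; lra)
                                     ltac:(rewrite Rminus_diag, Rabs_R0; lra))) in S.
  apply S.
  - exists (mkposreal _ Hr2). simpl. intros u v H1 H2. repeat split.
    + exists (dx g u v). apply is_derive_Reals. apply (smooth_first U g u v Hs). apply Hsq; lra.
    + exists (dy g u v). apply is_derive_Reals. apply (smooth_first U g u v Hs). apply Hsq; lra.
    + exists (dx (dy g) u v). apply is_derive_Reals. apply Exy; auto.
    + exists (dy (dx g) u v). apply is_derive_Reals. apply Eyx; auto.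
  - intros eps. pose proof (smooth_cont U _ Sxy x y Hu eps (cond_pos eps)) as [d [Hd Hd']].
    assert (Hm : 0 < Rmin d (r/2)) by (apply Rmin_pos; lra).
    exists (mkposreal _ Hm). simpl. intros u v H1 H2.
    assert (u1 : Rabs (u - x) < r / 2) by (eapply Rlt_le_trans; [exact H1| apply Rmin_r]).
    assert (v1 : Rabs (v - y) < r / 2) by (eapply Rlt_le_trans; [exact H2| apply Rmin_r]).
    rewrite (Derive_of _ _ _ (Exy u v u1 v1)).
    rewrite (Derive_of _ _ _ (Exy x y ltac:(rewrite Rminus_diag, Rabs_R0; lra)
                                     ltac:(rewrite Rminus_diag, Rabs_R0; lra))).
    apply Hd'. apply Hsq; lra.
    eapply Rlt_le_trans; [exact H1| apply Rmin_l].
    eapply Rlt_le_trans; [exact H2| apply Rmin_l].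
  - intros eps. pose proof (smooth_cont U _ Syx x y Hu eps (cond_pos eps)) as [d [Hd Hd']].
    assert (Hm : 0 < Rmin d (r/2)) by (apply Rmin_pos; lra).
    exists (mkposreal _ Hm). simpl. intros u v H1 H2.
    assert (u1 : Rabs (u - x) < r / 2) by (eapply Rlt_le_trans; [exact H1| apply Rmin_r]).
    assert (v1 : Rabs (v - y) < r / 2) by (eapply Rlt_le_trans; [exact H2| apply Rmin_r]).
    rewrite (Derive_of _ _ _ (Eyx u v u1 v1)).
    rewrite (Derive_of _ _ _ (Eyx x y ltac:(rewrite Rminus_diag, Rabs_R0; lra)
                                     ltac:(rewrite Rminus_diag, Rabs_R0; lra))).
    apply Hd'. apply Hsq; lra.
    eapply Rlt_le_trans; [exact H1| apply Rmin_l].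
    eapply Rlt_le_trans; [exact H2| apply Rmin_l].
Qed.

End Bm.
Import Bm.

Lemma const_seg f a b : a <= b -> (forall s, a <= s <= b -> derivable_pt_lim f s 0) -> f b = f a.
Proof.
  intros Hab D.
  assert (pr : forall x, a < x < b -> derivable_pt f x).
  { intros x Hx. exists 0. apply D; lra. }
  assert (C := null_derivative_loc f a b pr).
  unfold constant_D_eq in C. apply C.
  - intros x Hx. apply derivable_continuous_pt. exists 0. apply D; lra.
  - intros x P. unfold derive_pt. destruct (pr x P) as [l Hl]. simpl.
    eapply uniqueness_limite; eauto. apply D; lra.
  - lra.
Qed.

Lemma const_1d f c r : (forall s, Rabs (s - c) < r -> derivable_pt_lim f s 0) ->
  forall s, Rabs (s - c) < r -> f s = f c.
Proof.
  intros D s Hs. destruct (Rle_dec c s).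
  - apply const_seg; auto. intros t Ht. apply D.
    apply Rabs_def2 in Hs. apply Rabs_def1; lra.
  - symmetry. apply const_seg; [lra|]. intros t Ht. apply D.
    apply Rabs_def2 in Hs. apply Rabs_def1; lra.
Qed.

Lemma const_conn U g : open2 U -> connected2 U ->
  (forall x y, U x y -> is_dx g x y 0 /\ is_dy g x y 0) ->
  forall px py, U px py -> forall x y, U x y -> g x y = g px py.
Proof.
  intros Ho Hc D px py Hp.
  assert (L : forall x y, U x y -> exists r, 0 < r /\ forall x' y',
     Rabs (x' - x) < r -> Rabs (y' - y) < r -> U x' y' /\ g x' y' = g x y).
  { intros x y Hu. destruct (Ho x y Hu) as [r [Hr Hs]]. exists r; split; auto.
    intros x' y' H1 H2. split; auto.
    transitivity (g x' y).
    - apply (const_1d (fun t => g x' t) y r); auto. intros s Hs'. apply D. apply Hs; auto.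
    - apply (const_1d (fun t => g t y) x r); auto. intros s Hs'. apply D. apply Hs; auto.
      rewrite Rminus_diag, Rabs_R0; auto. }
  destruct (Hc (fun x y => U x y /\ g x y = g px py) (fun x y => U x y /\ g x y <> g px py))
    as [A|A].
  - intros x y [Hu E]. destruct (L x y Hu) as [r [Hr Hr']]. exists r; split; auto.
    intros x' y' H1 H2. destruct (Hr' x' y' H1 H2) as [U' E']. split; auto; congruence.
  - intros x y [Hu E]. destruct (L x y Hu) as [r [Hr Hr']]. exists r; split; auto.
    intros x' y' H1 H2. destruct (Hr' x' y' H1 H2) as [U' E']. split; auto; congruence.
  - intros x y Hu. destruct (classic (g x y = g px py)); auto.
  - intros x y Hu [[_ a] [_ b]]. auto.
  - intros x y Hu. apply A; auto.
  - destruct (A px py Hp) as [_ N]. congruence.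
Qed.

Lemma Hconst_conn U (F : R -> R -> H) : open2 U -> connected2 U ->
  (forall x y, U x y -> HD (fun t => F t y) x hzero /\ HD (fun t => F x t) y hzero) ->
  forall px py, U px py -> forall x y, U x y -> F x y = F px py.
Proof.
  intros Ho Hc D px py Hp x y Hu. apply H_ext.
  - apply (const_conn U (fun a b => h0 (F a b))); auto. intros a b Hab.
    destruct (D a b Hab) as [[? _] [? _]]; split; auto.
  - apply (const_conn U (fun a b => h1 (F a b))); auto. intros a b Hab.
    destruct (D a b Hab) as [[_ [? _]] [_ [? _]]]; split; auto.
  - apply (const_conn U (fun a b => h2 (F a b))); auto. intros a b Hab.
    destruct (D a b Hab) as [[_ [_ [? _]]] [_ [_ [? _]]]]; split; auto.
  - apply (const_conn U (fun a b => h3 (F a b))); auto. intros a b Hab.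
    destruct (D a b Hab) as [[_ [_ [_ ?]]] [_ [_ [_ ?]]]]; split; auto.
Qed.

Lemma HS_first U F x y : Hsmooth_on U F -> U x y ->
  HD (fun t => F t y) x (Hdx F x y) /\ HD (fun t => F x t) y (Hdy F x y).
Proof.
  intros (S0 & S1 & S2 & S3) Hu.
  destruct (smooth_first _ _ _ _ S0 Hu), (smooth_first _ _ _ _ S1 Hu),
    (smooth_first _ _ _ _ S2 Hu), (smooth_first _ _ _ _ S3 Hu).
  split; repeat split; auto.
Qed.
Lemma HS_dx U F : open2 U -> Hsmooth_on U F -> Hsmooth_on U (Hdx F).
Proof. intros Ho (S0 & S1 & S2 & S3). repeat split; apply smooth_dx; auto. Qed.
Lemma HS_dy U F : open2 U -> Hsmooth_on U F -> Hsmooth_on U (Hdy F).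
Proof. intros Ho (S0 & S1 & S2 & S3). repeat split; apply smooth_dy; auto. Qed.
Lemma HS_schwarz U F x y : open2 U -> Hsmooth_on U F -> U x y ->
  Hdx (Hdy F) x y = Hdy (Hdx F) x y.
Proof.
  intros Ho (S0 & S1 & S2 & S3) Hu. unfold Hdx, Hdy. simpl. apply H_ext; simpl;
  apply (smooth_schwarz U); auto.
Qed.

Lemma HD_eqU_x U (F G : R -> R -> H) x y a b : open2 U -> U x y ->
  (forall x y, U x y -> F x y = G x y) ->
  HD (fun t => F t y) x a -> HD (fun t => G t y) x b -> a = b.
Proof.
  intros Ho Hu E A B. destruct (open_line U x y Ho Hu) as [r [Hr [L1 L2]]].
  eapply HD_unique; [|exact B]. eapply HD_loc; [exact Hr| |exact A]. intros; apply E; auto.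
Qed.
Lemma HD_eqU_y U (F G : R -> R -> H) x y a b : open2 U -> U x y ->
  (forall x y, U x y -> F x y = G x y) ->
  HD (fun t => F x t) y a -> HD (fun t => G x t) y b -> a = b.
Proof.
  intros Ho Hu E A B. destruct (open_line U x y Ho Hu) as [r [Hr [L1 L2]]].
  eapply HD_unique; [|exact B]. eapply HD_loc; [exact Hr| |exact A]. intros; apply E; auto.
Qed.

Lemma hscal_1 v : hscal 1 v = v. Proof. hring. Qed.
Lemma hscal_0 v : hscal 0 v = hzero. Proof. hring. Qed.
Lemma hscal_m0 v : hscal (-0) v = hzero. Proof. hring. Qed.
Lemma hscal_m1 v : hscal (-1) v = hopp v. Proof. hring. Qed.

Lemma Hd_10 F x y : Hd F x y 1 0 = Hdx F x y.
Proof. unfold Hd. generalize (Hdx F x y) (Hdy F x y). hring. Qed.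
Lemma Hd_01 F x y : Hd F x y 0 1 = Hdy F x y.
Proof. unfold Hd. generalize (Hdx F x y) (Hdy F x y). hring. Qed.
Lemma Hd_m01 F x y : Hd F x y (-0) 1 = Hdy F x y.
Proof. unfold Hd. generalize (Hdx F x y) (Hdy F x y). hring. Qed.
Lemma Hd_m10 F x y : Hd F x y (-1) 0 = hopp (Hdx F x y).
Proof. unfold Hd. generalize (Hdx F x y) (Hdy F x y). hring. Qed.

Lemma hcancel_l a b c : a <> hzero -> hmul a b = hmul a c -> b = c.
Proof.
  intros Ha E. rewrite <- (hmul_1l b), <- (hmul_1l c), <- (hinv_l a Ha), <- !hmul_assoc, E. auto.
Qed.

Section Geom.
Variable U : R -> R -> Prop.
Variable f Rn : R -> R -> H.
Hypothesis HUo : open2 U.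
Hypothesis Hfs : Hsmooth_on U f.
Hypothesis Hfx : forall x y, U x y -> Hdx f x y <> hzero.
Hypothesis HR : right_normal U f Rn.
Hypothesis Hmin : minimal U f.

Lemma G_fy x y : U x y -> Hdy f x y = hopp (hmul (Hdx f x y) (Rn x y)).
Proof. intros Hu. pose proof (HR x y Hu 1 0) as E. rewrite Hd_m01, Hd_10 in E. auto. Qed.
Lemma hopp_hopp a : hopp (hopp a) = a. Proof. hring. Qed.
Lemma G_fx x y : U x y -> Hdx f x y = hmul (Hdy f x y) (Rn x y).
Proof. intros Hu. pose proof (HR x y Hu 0 1) as E. rewrite Hd_m10, Hd_01 in E.
  rewrite <- (hopp_hopp (Hdx f x y)), E, hopp_hopp. auto. Qed.

Lemma alg_RR a b : a = hmul (hopp (hmul a b)) b -> hmul a (hmul b b) = hmul a (hopp hone).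
Proof. intros E. transitivity (hopp (hmul (hopp (hmul a b)) b)). hring. rewrite <- E. hring. Qed.

Lemma G_RR x y : U x y -> hmul (Rn x y) (Rn x y) = hopp hone.
Proof.
  intros Hu. apply (hcancel_l (Hdx f x y)); auto. apply alg_RR.
  rewrite <- G_fy; auto. apply G_fx; auto.
Qed.

Lemma G_Rn x y : U x y -> Rn x y = hopp (hmul (hinv (Hdx f x y)) (Hdy f x y)).
Proof.
  intros Hu. rewrite G_fy; auto. transitivity (hmul (hmul (hinv (Hdx f x y)) (Hdx f x y)) (Rn x y)).
  rewrite hinv_l; auto. rewrite hmul_1l; auto. generalize (hinv (Hdx f x y)). hring.
Qed.

Lemma G_Rx x y : U x y -> HD (fun t => Rn t y) x (Hdx Rn x y).
Proof.
  intros Hu. destruct (HS_first U _ x y (HS_dx U f HUo Hfs) Hu) as [A _].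
  destruct (HS_first U _ x y (HS_dy U f HUo Hfs) Hu) as [B _].
  destruct (HD_inv _ _ _ A (hnorm2_pos _ (Hfx x y Hu))) as [w W].
  pose proof (HD_opp _ _ _ (HD_mul _ _ _ _ _ W B)) as C.
  destruct (open_line U x y HUo Hu) as [r [Hr [L1 L2]]].
  assert (C' := HD_loc _ (fun t => Rn t y) _ _ _ Hr (fun s Hs => eq_sym (G_Rn s y (L1 s Hs))) C).
  rewrite (Hdx_spec _ _ _ _ C'). auto.
Qed.
Lemma G_Ry x y : U x y -> HD (fun t => Rn x t) y (Hdy Rn x y).
Proof.
  intros Hu. destruct (HS_first U _ x y (HS_dx U f HUo Hfs) Hu) as [_ A].
  destruct (HS_first U _ x y (HS_dy U f HUo Hfs) Hu) as [_ B].
  destruct (HD_inv _ _ _ A (hnorm2_pos _ (Hfx x y Hu))) as [w W].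
  pose proof (HD_opp _ _ _ (HD_mul _ _ _ _ _ W B)) as C.
  destruct (open_line U x y HUo Hu) as [r [Hr [L1 L2]]].
  assert (C' := HD_loc _ (fun t => Rn x t) _ _ _ Hr (fun s Hs => eq_sym (G_Rn x s (L2 s Hs))) C).
  rewrite (Hdy_spec _ _ _ _ C'). auto.
Qed.

Lemma G_dRRx x y : U x y ->
  hadd (hmul (Hdx Rn x y) (Rn x y)) (hmul (Rn x y) (Hdx Rn x y)) = hzero.
Proof.
  intros Hu. eapply (HD_eqU_x U (fun x y => hmul (Rn x y) (Rn x y)) (fun _ _ => hopp hone) x y);
  [exact HUo | exact Hu | exact G_RR | eapply HD_mulE; [apply G_Rx; auto | apply G_Rx; auto | reflexivity] | apply HD_const].
Qed.
Lemma G_dRRy x y : U x y ->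
  hadd (hmul (Hdy Rn x y) (Rn x y)) (hmul (Rn x y) (Hdy Rn x y)) = hzero.
Proof.
  intros Hu. eapply (HD_eqU_y U (fun x y => hmul (Rn x y) (Rn x y)) (fun _ _ => hopp hone) x y);
  [exact HUo | exact Hu | exact G_RR | eapply HD_mulE; [apply G_Ry; auto | apply G_Ry; auto | reflexivity] | apply HD_const].
Qed.

Ltac hlin := intros; repeat match goal with x : H |- _ => destruct x end;
  repeat match goal with E : @eq H _ _ |- _ =>
    let e0 := fresh "e" in let e1 := fresh "e" in let e2 := fresh "e" in let e3 := fresh "e" in
    pose proof (f_equal h0 E) as e0; pose proof (f_equal h1 E) as e1;
    pose proof (f_equal h2 E) as e2; pose proof (f_equal h3 E) as e3; clear E; hunf; simpl in e0, e1, e2, e3 end;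
  hunf; apply H_ext; simpl; lra.

Lemma alg_min A B R X Y fxy fyx :
  fxy = fyx -> fyx = hopp (hadd (hmul A R) (hmul B X)) ->
  fxy = hadd (hmul (hopp A) R) (hmul (hopp (hmul B R)) Y) ->
  hmul B X = hmul B (hmul R Y).
Proof. intros E1 E2 E3. rewrite E1, E2 in E3. clear E1 E2. hlin. Qed.

Lemma hadd_eq0 a b : hadd a b = hzero -> b = hopp a.
Proof. hlin. Qed.

Lemma G_RxR x y : U x y -> Hdx Rn x y = hmul (Rn x y) (Hdy Rn x y).
Proof.
  intros Hu.
  assert (E1 : Hdx (Hdy f) x y = hopp (hadd (hmul (Hdx (Hdx f) x y) (Rn x y)) (hmul (Hdx f x y) (Hdx Rn x y)))).
  { eapply (HD_eqU_x U (Hdy f) (fun x y => hopp (hmul (Hdx f x y) (Rn x y))) x y);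
    [exact HUo|exact Hu| exact G_fy | apply (proj1 (HS_first U _ x y (HS_dy U f HUo Hfs) Hu)) |
     eapply HD_oppE; [eapply HD_mulE; [apply (proj1 (HS_first U _ x y (HS_dx U f HUo Hfs) Hu)) | apply G_Rx; auto | reflexivity] | reflexivity]]. }
  assert (E2 : Hdy (Hdx f) x y = hadd (hmul (Hdy (Hdy f) x y) (Rn x y)) (hmul (Hdy f x y) (Hdy Rn x y))).
  { eapply (HD_eqU_y U (Hdx f) (fun x y => hmul (Hdy f x y) (Rn x y)) x y);
    [exact HUo|exact Hu| exact G_fx | apply (proj2 (HS_first U _ x y (HS_dx U f HUo Hfs) Hu)) |
     eapply HD_mulE; [apply (proj2 (HS_first U _ x y (HS_dy U f HUo Hfs) Hu)) | apply G_Ry; auto | reflexivity]]. }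
  pose proof (HS_schwarz U f x y HUo Hfs Hu) as S.
  pose proof (hadd_eq0 _ _ (Hmin x y Hu)) as M.
  rewrite M, G_fy in E2; auto.
  apply (hcancel_l (Hdx f x y)); auto.
  eapply alg_min; [ exact (eq_sym S) | exact E1 | exact E2 ].
Qed.

Lemma G_RyR x y : U x y -> Hdy Rn x y = hopp (hmul (Rn x y) (Hdx Rn x y)).
Proof.
  intros Hu. rewrite G_RxR; auto. pose proof (G_RR x y Hu) as E.
  transitivity (hopp (hmul (hmul (Rn x y) (Rn x y)) (Hdy Rn x y))).
  rewrite E. hring. generalize (Rn x y) (Hdy Rn x y). hring.
Qed.

Lemma G_rstar x y a b : U x y -> Hd Rn x y (- b) a = hopp (hmul (Rn x y) (Hd Rn x y a b)).
Proof.
  intros Hu. unfold Hd. rewrite (G_RxR x y Hu). pose proof (G_RR x y Hu) as E.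
  transitivity (hadd (hscal (-b) (hmul (Rn x y) (Hdy Rn x y)))
                     (hscal (-a) (hmul (hmul (Rn x y) (Rn x y)) (Hdy Rn x y)))).
  rewrite E. generalize (Rn x y) (Hdy Rn x y). hring.
  generalize (Rn x y) (Hdy Rn x y). hring.
Qed.

Lemma hadd_eq0' a b : hadd a b = hzero -> a = hopp b.
Proof. hlin. Qed.

Lemma G_rR x y a b : U x y ->
  hmul (Hd Rn x y a b) (Rn x y) = hopp (hmul (Rn x y) (Hd Rn x y a b)).
Proof.
  intros Hu. pose proof (G_dRRx x y Hu) as E1. pose proof (G_dRRy x y Hu) as E2.
  unfold Hd. apply hadd_eq0'. revert E1 E2. generalize (Rn x y) (Hdx Rn x y) (Hdy Rn x y).
  intros R X Y E1 E2.
  transitivity (hadd (hscal a (hadd (hmul X R) (hmul R X))) (hscal b (hadd (hmul Y R) (hmul R Y)))).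
  hring. rewrite E1, E2. hring.
Qed.

End Geom.

Definition cc (mu : H) : H := hmul (hmul hi (hadd hone mu)) (hinv (hsub hone mu)).
Definition ss (mu : H) : H := hsub (hadd mu (hinv mu)) (hscal 2 hone).
Definition tt (mu : H) : H := hsub (hinv mu) mu.
Definition kk (mu : H) : H := hscal (- / 4) (hmul (hmul (hsub hone mu) (hsub hone mu)) (hinv mu)).

Lemma inv_c u v : hinv (mkH u v 0 0) = mkH (u / (u*u+v*v)) (- v / (u*u+v*v)) 0 0.
Proof. unfold hinv, hscal, hconj, hnorm2. simpl. replace (u * u + v * v + 0 * 0 + 0 * 0) with (u*u+v*v) by ring. apply H_ext; simpl; unfold Rdiv; ring. Qed.
Lemma mul_c a b c d : hmul (mkH a b 0 0) (mkH c d 0 0) = mkH (a*c - b*d) (a*d + b*c) 0 0.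
Proof. unfold hmul; apply H_ext; simpl; ring. Qed.
Lemma add_c a b c d : hadd (mkH a b 0 0) (mkH c d 0 0) = mkH (a+c) (b+d) 0 0.
Proof. unfold hadd; apply H_ext; simpl; ring. Qed.
Lemma sub_c a b c d : hsub (mkH a b 0 0) (mkH c d 0 0) = mkH (a-c) (b-d) 0 0.
Proof. unfold hsub, hadd, hopp; apply H_ext; simpl; ring. Qed.
Lemma scal_c r a b : hscal r (mkH a b 0 0) = mkH (r*a) (r*b) 0 0.
Proof. unfold hscal; apply H_ext; simpl; ring. Qed.

Lemma cplx_pre mu : is_complex mu -> mu <> hzero -> mu <> hone ->
  exists u v, mu = mkH u v 0 0 /\ u * u + v * v <> 0 /\ (1 - u) * (1 - u) + (0 - v) * (0 - v) <> 0.
Proof.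
  intros [E2 E3] N0 N1. destruct mu as [u v a b]; simpl in *; subst. exists u, v.
  split; auto. split.
  - intro E. apply N0. assert (u = 0) by nra. assert (v = 0) by nra. subst; reflexivity.
  - intro E. apply N1. assert (u = 1) by nra. assert (v = 0) by nra. subst; reflexivity.
Qed.

Ltac csimp := repeat (rewrite ?inv_c, ?mul_c, ?add_c, ?sub_c, ?scal_c).
Ltac cplx mu := let u := fresh "u" in let v := fresh "v" in let E := fresh "Emu" in
  let N1 := fresh "N" in let N2 := fresh "N" in
  intros; destruct (cplx_pre mu) as (u & v & E & N1 & N2); auto; subst mu;
  unfold cc, ss, tt, kk, hi, hone, hzero; csimp; apply H_ext; simpl; field; repeat split; try assumption; let Hc := fresh "Hc" in intro Hc; first [apply N2; nra | apply N1; nra].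

Lemma Z1 mu : is_complex mu -> mu <> hzero -> mu <> hone ->
  hadd (hscal 4 hone) (hadd (ss mu) (hmul (hmul hi (tt mu)) (cc mu))) = hzero.
Proof. cplx mu. Qed.
Lemma Z2 mu : is_complex mu -> mu <> hzero -> mu <> hone ->
  hsub (hmul (ss mu) (cc mu)) (hmul hi (tt mu)) = hzero.
Proof. cplx mu. Qed.
Lemma Z1' mu : is_complex mu -> mu <> hzero -> mu <> hone ->
  hadd (hscal 4 hone) (hadd (ss mu) (hmul (hmul (cc mu) hi) (tt mu))) = hzero.
Proof. cplx mu. Qed.
Lemma Z2' mu : is_complex mu -> mu <> hzero -> mu <> hone ->
  hsub (hmul (cc mu) (ss mu)) (hmul hi (tt mu)) = hzero.
Proof. cplx mu. Qed.
Lemma Z3 mu : is_complex mu -> mu <> hzero -> mu <> hone ->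
  hsub (hmul (kk mu) (cc mu)) (hmul (cc mu) (kk mu)) = hzero.
Proof. cplx mu. Qed.
Lemma Z4 mu : is_complex mu -> mu <> hzero -> mu <> hone ->
  hsub (hmul (hadd hone (hmul (cc mu) (cc mu))) (kk mu)) hone = hzero.
Proof. cplx mu. Qed.

Definition Bf (X Y m1 m2 : H) : H :=
  hadd (hmul (hscal (/2) (hsub (hopp (hscal (/2) X)) (hmul (hscal (/2) Y) hi))) (hsub m1 hone))
       (hmul (hscal (/2) (hadd (hopp (hscal (/2) X)) (hmul (hscal (/2) Y) hi))) (hsub m2 hone)).

Lemma starA_app f Rn x y a b v : m_app (starA f Rn x y a b) v =
  (hmul (f x y) (hscal (/2) (hmul (Hd Rn x y a b) (snd v))), hscal (/2) (hmul (Hd Rn x y a b) (snd v))).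
Proof.
  unfold starA, m_scal, m_mul, m_app, Gm, Ginv. simpl. destruct v as [v1 v2]; simpl.
  generalize (f x y) (Hd Rn x y a b). intros F r. f_equal; hring.
Qed.
Lemma hopfA_app f Rn x y a b v : m_app (hopfA f Rn x y a b) v =
  (hmul (f x y) (hopp (hscal (/2) (hmul (Hd Rn x y (-b) a) (snd v)))), hopp (hscal (/2) (hmul (Hd Rn x y (-b) a) (snd v)))).
Proof.
  unfold hopfA, starA, m_opp, m_scal, m_mul, m_app, Gm, Ginv. simpl. destruct v as [v1 v2]; simpl.
  generalize (f x y) (Hd Rn x y (-b) a). intros F r. f_equal; hring.
Qed.

Lemma dS_snd f Rn mu phi x y a b :
  snd (dS f Rn mu phi x y a b) =
  hadd (snd (dphi phi x y a b)) (Bf (hmul (Hd Rn x y (-b) a) (snd (phi x y))) (hmul (Hd Rn x y a b) (snd (phi x y))) mu (hinv mu)).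
Proof.
  unfold dS, A10, A01. rewrite starA_app, hopfA_app. unfold v_add, v_rmul, v_scal, v_opp, Bf.
  simpl. generalize (snd (dphi phi x y a b)) (hmul (Hd Rn x y a b) (snd (phi x y))) (hmul (Hd Rn x y (-b) a) (snd (phi x y))) (hinv mu).
  intros P Y X m2. f_equal; try hring.
Qed.

Lemma hmul_distr_l F A B : hadd (hmul F A) (hmul F B) = hmul F (hadd A B). Proof. hring. Qed.
Lemma hscal_mul F r A : hscal r (hmul F A) = hmul F (hscal r A). Proof. hring. Qed.
Lemma hopp_mul F A : hopp (hmul F A) = hmul F (hopp A). Proof. hring. Qed.
Lemma hsub_mul F A B : hsub (hmul F A) (hmul F B) = hmul F (hsub A B). Proof. hring. Qed.

Lemma dS_fst f Rn mu phi x y a b :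
  fst (dS f Rn mu phi x y a b) =
  hadd (fst (dphi phi x y a b)) (hmul (f x y) (Bf (hmul (Hd Rn x y (-b) a) (snd (phi x y))) (hmul (Hd Rn x y a b) (snd (phi x y))) mu (hinv mu))).
Proof.
  unfold dS, A10, A01. rewrite starA_app, hopfA_app. unfold v_add, v_rmul, v_scal, v_opp, Bf.
  simpl. generalize (fst (dphi phi x y a b)) (hmul (Hd Rn x y a b) (snd (phi x y))) (hmul (Hd Rn x y (-b) a) (snd (phi x y))) (hinv mu) (f x y).
  intros P Y X m2 F. f_equal.
  hring.
Qed.

Lemma alg_fwd R Y db m1 m2 c :
  hmul R R = hopp hone ->
  hadd (hscal 4 hone) (hadd (hsub (hadd m1 m2) (hscal 2 hone)) (hmul (hmul hi (hsub m2 m1)) c)) = hzero ->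
  hsub (hmul (hsub (hadd m1 m2) (hscal 2 hone)) c) (hmul hi (hsub m2 m1)) = hzero ->
  db = hopp (Bf (hopp (hmul R Y)) Y m1 m2) ->
  hsub (hadd Y (hmul R db)) (hmul db c) = hzero.
Proof.
  intros E Z1 Z2 D. subst db.
  transitivity (hadd (hadd (hscal (-/4) (hmul (hmul (hadd (hmul R R) hone) Y) (hsub (hadd m1 m2) (hscal 2 hone))))
     (hscal (/4) (hmul Y (hadd (hscal 4 hone) (hadd (hsub (hadd m1 m2) (hscal 2 hone)) (hmul (hmul hi (hsub m2 m1)) c))))))
     (hscal (/4) (hmul (hmul R Y) (hsub (hmul (hsub (hadd m1 m2) (hscal 2 hone)) c) (hmul hi (hsub m2 m1)))))).
  - unfold Bf. hring.
  - rewrite E, Z1, Z2. hring.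
Qed.

Lemma alg_bwd R r m m1 m2 c :
  hmul R R = hopp hone ->
  hmul r R = hopp (hmul R r) ->
  hadd (hscal 4 hone) (hadd (hsub (hadd m1 m2) (hscal 2 hone)) (hmul (hmul c hi) (hsub m2 m1))) = hzero ->
  hsub (hmul c (hsub (hadd m1 m2) (hscal 2 hone))) (hmul hi (hsub m2 m1)) = hzero ->
  hadd (hmul r m) (Bf (hmul (hopp (hmul R r)) (hadd (hmul R m) (hmul m c)))
                      (hmul r (hadd (hmul R m) (hmul m c))) m1 m2) = hzero.
Proof.
  intros E1 E2 Z1 Z2.
  assert (E1' : hadd (hmul R R) hone = hzero) by (rewrite E1; hring).
  assert (E2' : hadd (hmul r R) (hmul R r) = hzero) by (rewrite E2; hring).
  transitivity (hadd (hadd (hadd (hadd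
     (hscal (/4) (hmul (hmul (hmul R (hadd (hmul r R) (hmul R r))) m) (hsub (hadd m1 m2) (hscal 2 hone))))
     (hscal (-/4) (hmul (hmul (hmul (hadd (hmul R R) hone) r) m) (hsub (hadd m1 m2) (hscal 2 hone)))))
     (hscal (/4) (hmul (hmul (hmul (hadd (hmul r R) (hmul R r)) m) hi) (hsub m2 m1))))
     (hscal (/4) (hmul (hmul r m) (hadd (hscal 4 hone) (hadd (hsub (hadd m1 m2) (hscal 2 hone)) (hmul (hmul c hi) (hsub m2 m1)))))))
     (hscal (/4) (hmul (hmul (hmul R r) m) (hsub (hmul c (hsub (hadd m1 m2) (hscal 2 hone))) (hmul hi (hsub m2 m1)))))).
  - unfold Bf. hring.
  - rewrite E1', E2', Z1, Z2. hring.
Qed.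

Lemma alg_L R b c k :
  hmul R R = hopp hone ->
  hsub (hmul k c) (hmul c k) = hzero ->
  hsub (hmul (hadd hone (hmul c c)) k) hone = hzero ->
  hadd (hmul R (hopp (hmul (hsub (hmul R b) (hmul b c)) k)))
       (hmul (hopp (hmul (hsub (hmul R b) (hmul b c)) k)) c) = b.
Proof.
  intros E1 Z3 Z4.
  assert (E1' : hadd (hmul R R) hone = hzero) by (rewrite E1; hring).
  transitivity (hadd b (hadd (hadd (hadd
     (hopp (hmul (hmul (hadd (hmul R R) hone) b) k))
     (hopp (hmul (hmul R b) (hsub (hmul k c) (hmul c k)))))
     (hmul b (hsub (hmul (hadd hone (hmul c c)) k) hone)))
     (hmul (hmul b c) (hsub (hmul k c) (hmul c k))))).
  - hring.
  - rewrite E1', Z3, Z4. hring.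
Qed.

Lemma hmul_oppl_assoc R r b : hmul (hopp (hmul R r)) b = hopp (hmul R (hmul r b)). Proof. hring. Qed.
Lemma Bf_zero R m1 m2 : Bf (hopp (hmul R hzero)) hzero m1 m2 = hzero.
Proof. unfold Bf. hring. Qed.
Lemma hmul_distr_l' F A B : hadd (hmul F A) (hmul F B) = hmul F (hadd A B). Proof. hring. Qed.
Lemma alg_PQ P F B Q : hadd P (hmul F B) = hzero -> hadd Q B = hzero -> P = hmul F Q.
Proof. intros E1 E2. apply hadd_eq0' in E1. apply hadd_eq0' in E2. subst. hring. Qed.
Lemma alg_fs P F Fx Q b R m0 c : P = hmul F Q -> b = hadd (hmul R m0) (hmul m0 c) -> m0 <> hzero ->
  hmul (hopp (hadd (hsub P (hadd (hmul Fx b) (hmul F Q))) (hmul (hmul Fx m0) c))) (hinv m0) = hmul Fx R.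
Proof.
  intros E1 E2 N. subst. transitivity (hmul (hmul (hmul Fx R) m0) (hinv m0)).
  generalize (hinv m0). hring. rewrite <- hmul_assoc, hinv_r, hmul_1r; auto.
Qed.
Lemma alg_rep P F b m0 c : m0 <> hzero ->
  hadd (hmul hone (hsub (hopp (hmul (hmul (hopp (hadd (hsub P (hmul F b)) (hmul (hmul F m0) c))) (hinv m0)) m0))
     (hmul (hmul F m0) c))) (hmul F b) = P.
Proof. intros N. rewrite <- (hmul_assoc _ (hinv m0)), hinv_l, hmul_1r; auto. hring. Qed.
Lemma hopp_0 : hopp hzero = hzero. Proof. hring. Qed.
Lemma alg_z R c : hadd (hmul R hzero) (hmul hzero c) = hzero. Proof. hring. Qed.
Lemma alg_lin a b X Y R : hadd (hscal a (hmul X R)) (hscal b (hmul Y R)) = hmul (hadd (hscal a X) (hscal b Y)) R.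
Proof. hring. Qed.
Lemma hmul_1l' a : hadd (hmul hzero a) (hmul hone a) = a. Proof. hring. Qed.

Lemma Bf_00 m1 m2 : Bf (hmul hzero hzero) hzero m1 m2 = hzero. Proof. unfold Bf. hring. Qed.
Lemma Bf_00' X Y m1 m2 : Bf (hmul X hzero) (hmul Y hzero) m1 m2 = hzero. Proof. unfold Bf. hring. Qed.
Lemma alg_phi1 vx Fx R m c F Rx : vx = hmul Fx R ->
  hadd (hsub (hopp (hmul vx m)) (hmul (hmul Fx m) c))
       (hadd (hmul Fx (hadd (hmul R m) (hmul m c))) (hmul F (hadd (hmul Rx m) hzero))) = hmul F (hmul Rx m).
Proof. intros; subst; hring. Qed.
Lemma alg_lin2 a b X Y F : hadd (hscal a (hmul F X)) (hscal b (hmul F Y)) = hmul F (hadd (hscal a X) (hscal b Y)).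
Proof. hring. Qed.
Lemma alg_fin F P B : hadd P B = hzero -> hadd (hmul F P) (hmul F B) = hzero.
Proof. intros E. rewrite hmul_distr_l', E. hring. Qed.
Lemma Hd_zero F x y : Hdx F x y = hzero -> Hdy F x y = hzero -> forall a b, Hd F x y a b = hzero.
Proof. intros E1 E2 a b. unfold Hd. rewrite E1, E2. hring. Qed.
Lemma pair_eq (p : H2) a b : fst p = a -> snd p = b -> p = (a, b).
Proof. destruct p; simpl; intros; subst; auto. Qed.

Section Main.
Variable U : R -> R -> Prop.
Variable f Rn : R -> R -> H.
Variable mu : H.
Hypothesis HUo : open2 U.
Hypothesis HUc : connected2 U.
Hypothesis Hfs : Hsmooth_on U f.
Hypothesis Hfx : forall x y, U x y -> Hdx f x y <> hzero.
Hypothesis HR : right_normal U f Rn.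
Hypothesis Hmin : minimal U f.
Hypothesis Hmu : is_complex mu.
Hypothesis Hmu0 : mu <> hzero.
Hypothesis Hmu1 : mu <> hone.

Let rstar := G_rstar U f Rn HUo Hfs Hfx HR Hmin.
Let rR := G_rR U f Rn HUo Hfs Hfx HR.
Let RR := G_RR U f Rn Hfx HR.
Let Rx := G_Rx U f Rn HUo Hfs Hfx HR.
Let Ry := G_Ry U f Rn HUo Hfs Hfx HR.
Let Gfy := G_fy U f Rn HR.
Let Gfx := G_fx U f Rn HR.

Section Phi.
Variable phi : R -> R -> H2.
Hypothesis Hpar : parallel U f Rn mu phi.

Lemma par_snd x y a b : U x y ->
  hadd (Hd (fun x y => snd (phi x y)) x y a b)
       (Bf (hopp (hmul (Rn x y) (hmul (Hd Rn x y a b) (snd (phi x y))))) (hmul (Hd Rn x y a b) (snd (phi x y))) mu (hinv mu)) = hzero.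
Proof.
  intros Hu. pose proof (f_equal snd (Hpar x y Hu a b)) as E.
  rewrite dS_snd in E. unfold dphi in E; simpl in E. rewrite (rstar x y a b Hu), hmul_oppl_assoc in E. exact E.
Qed.
Lemma par_fst x y a b : U x y ->
  hadd (Hd (fun x y => fst (phi x y)) x y a b)
       (hmul (f x y) (Bf (hopp (hmul (Rn x y) (hmul (Hd Rn x y a b) (snd (phi x y))))) (hmul (Hd Rn x y a b) (snd (phi x y))) mu (hinv mu))) = hzero.
Proof.
  intros Hu. pose proof (f_equal fst (Hpar x y Hu a b)) as E.
  rewrite dS_fst in E. unfold dphi in E; simpl in E. rewrite (rstar x y a b Hu), hmul_oppl_assoc in E. exact E.
Qed.

Lemma fwd_core x y a b : U x y ->
  hsub (hadd (hmul (Hd Rn x y a b) (snd (phi x y))) (hmul (Rn x y) (Hd (fun x y => snd (phi x y)) x y a b)))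
       (hmul (Hd (fun x y => snd (phi x y)) x y a b) (cc mu)) = hzero.
Proof.
  intros Hu. pose proof (par_snd x y a b Hu) as E.
  apply (alg_fwd _ _ _ mu (hinv mu)).
  - apply RR; auto.
  - pose proof (Z1 mu Hmu Hmu0 Hmu1) as Z. unfold ss, tt in Z. exact Z.
  - pose proof (Z2 mu Hmu Hmu0 Hmu1) as Z. unfold ss, tt in Z. exact Z.
  - apply hadd_eq0' in E. exact E.
Qed.

Hypothesis Hphi : section_smooth U phi.

Lemma phi2x x y : U x y -> HD (fun t => snd (phi t y)) x (Hdx (fun x y => snd (phi x y)) x y).
Proof. intros Hu. exact (proj1 (HS_first U _ x y (proj2 Hphi) Hu)). Qed.
Lemma phi2y x y : U x y -> HD (fun t => snd (phi x t)) y (Hdy (fun x y => snd (phi x y)) x y).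
Proof. intros Hu. exact (proj2 (HS_first U _ x y (proj2 Hphi) Hu)). Qed.
Lemma phi1x x y : U x y -> HD (fun t => fst (phi t y)) x (Hdx (fun x y => fst (phi x y)) x y).
Proof. intros Hu. exact (proj1 (HS_first U _ x y (proj1 Hphi) Hu)). Qed.
Lemma phi1y x y : U x y -> HD (fun t => fst (phi x t)) y (Hdy (fun x y => fst (phi x y)) x y).
Proof. intros Hu. exact (proj2 (HS_first U _ x y (proj1 Hphi) Hu)). Qed.

Definition Mf (x y : R) : H :=
  hopp (hmul (hsub (hmul (Rn x y) (snd (phi x y))) (hmul (snd (phi x y)) (cc mu))) (kk mu)).

Lemma Mf_dx x y : U x y -> HD (fun t => Mf t y) x hzero.
Proof.
  intros Hu. unfold Mf.
  eapply HD_oppE; [ eapply HD_mulE; [ eapply HD_subE; [ eapply HD_mulE; [apply Rx; auto | apply phi2x; auto | reflexivity]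
     | eapply HD_mulE; [apply phi2x; auto | apply HD_const | reflexivity] | reflexivity] | apply HD_const | reflexivity ] | ].
  pose proof (fwd_core x y 1 0 Hu) as E. rewrite !Hd_10 in E.
  rewrite !hmul_0r, !hadd_0r, E, hmul_0l, ?hadd_0l, ?hopp_0; auto.
Qed.
Lemma Mf_dy x y : U x y -> HD (fun t => Mf x t) y hzero.
Proof.
  intros Hu. unfold Mf.
  eapply HD_oppE; [ eapply HD_mulE; [ eapply HD_subE; [ eapply HD_mulE; [apply Ry; auto | apply phi2y; auto | reflexivity]
     | eapply HD_mulE; [apply phi2y; auto | apply HD_const | reflexivity] | reflexivity] | apply HD_const | reflexivity ] | ].
  pose proof (fwd_core x y 0 1 Hu) as E. rewrite !Hd_01 in E.
  rewrite !hmul_0r, !hadd_0r, E, hmul_0l, ?hadd_0l, ?hopp_0; auto.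
Qed.

Lemma Mf_rep x y : U x y -> snd (phi x y) = hadd (hmul (Rn x y) (Mf x y)) (hmul (Mf x y) (cc mu)).
Proof.
  intros Hu. unfold Mf. symmetry. apply alg_L.
  - apply RR; auto.
  - exact (Z3 mu Hmu Hmu0 Hmu1).
  - exact (Z4 mu Hmu Hmu0 Hmu1).
Qed.

Lemma fwd :
  ((exists n : H, forall x y, U x y -> phi x y = v_rmul e_vec n) \/
   (exists m : H, m <> hzero /\
    exists fs : R -> R -> H, conjugate_surface U f fs /\
    forall x y, U x y ->
      let c := hmul (hmul hi (hadd hone mu)) (hinv (hsub hone mu)) in
      let alpha := hsub (hopp (hmul (fs x y) m)) (hmul (hmul (f x y) m) c) in
      let beta := hadd (hmul (Rn x y) m) (hmul m c) in
      phi x y = v_add (v_rmul e_vec alpha) (v_rmul (psi_vec f x y) beta))).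
Proof.
  destruct (classic (exists px py, U px py)) as [[px [py Hp]] | NE].
  2: { left. exists hzero. intros x y Hu. exfalso. apply NE; eauto. }
  assert (Mc : forall x y, U x y -> Mf x y = Mf px py).
  { apply (Hconst_conn U Mf HUo HUc); auto. intros x y Hu. split; [apply Mf_dx | apply Mf_dy]; auto. }
  set (m0 := Mf px py) in *.
  assert (Brep : forall x y, U x y -> snd (phi x y) = hadd (hmul (Rn x y) m0) (hmul m0 (cc mu))).
  { intros x y Hu. rewrite <- (Mc x y Hu). apply Mf_rep; auto. }
  destruct (classic (m0 = hzero)) as [Z | NZ].
  - left. exists (fst (phi px py)).
    assert (B0 : forall x y, U x y -> snd (phi x y) = hzero).
    { intros x y Hu. rewrite Brep, Z; auto. apply alg_z. }
    assert (C1 : forall x y, U x y -> fst (phi x y) = fst (phi px py)).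
    { apply (Hconst_conn U (fun x y => fst (phi x y)) HUo HUc); auto. intros x y Hu. split.
      - eapply HD_eqv. apply phi1x; auto. pose proof (par_fst x y 1 0 Hu) as E.
        rewrite Hd_10, B0, hmul_0r, Bf_zero, hmul_0r, hadd_0r in E; auto.
      - eapply HD_eqv. apply phi1y; auto. pose proof (par_fst x y 0 1 Hu) as E.
        rewrite Hd_01, B0, hmul_0r, Bf_zero, hmul_0r, hadd_0r in E; auto. }
    intros x y Hu. rewrite (surjective_pairing (phi x y)), C1, B0; auto.
    unfold v_rmul, e_vec; simpl. rewrite hmul_1l, hmul_0l; auto.
  - right. exists m0. split; auto.
    exists (fun x y => hmul (hopp (hadd (hsub (fst (phi x y)) (hmul (f x y) (snd (phi x y)))) (hmul (hmul (f x y) m0) (cc mu)))) (hinv m0)).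
    split.
    + intros x y Hu.
      destruct (HS_first U f x y Hfs Hu) as [Fx Fy].
      assert (Dx : HD (fun t => hmul (hopp (hadd (hsub (fst (phi t y)) (hmul (f t y) (snd (phi t y)))) (hmul (hmul (f t y) m0) (cc mu)))) (hinv m0)) x (hmul (Hdx f x y) (Rn x y))).
      { eapply HD_eqv. apply HD_mulr. apply HD_opp. apply HD_add. apply HD_sub. apply phi1x; auto.
        apply HD_mul. exact Fx. apply phi2x; auto. apply HD_mulr. apply HD_mulr. exact Fx.
        apply alg_fs; auto. eapply alg_PQ. rewrite <- (Hd_10 (fun x y => fst (phi x y))).
        exact (par_fst x y 1 0 Hu). rewrite <- (Hd_10 (fun x y => snd (phi x y))).
        exact (par_snd x y 1 0 Hu). }
      assert (Dy : HD (fun t => hmul (hopp (hadd (hsub (fst (phi x t)) (hmul (f x t) (snd (phi x t)))) (hmul (hmul (f x t) m0) (cc mu)))) (hinv m0)) y (hmul (Hdy f x y) (Rn x y))).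
      { eapply HD_eqv. apply HD_mulr. apply HD_opp. apply HD_add. apply HD_sub. apply phi1y; auto.
        apply HD_mul. exact Fy. apply phi2y; auto. apply HD_mulr. apply HD_mulr. exact Fy.
        apply alg_fs; auto. eapply alg_PQ. rewrite <- (Hd_01 (fun x y => fst (phi x y))).
        exact (par_fst x y 0 1 Hu). rewrite <- (Hd_01 (fun x y => snd (phi x y))).
        exact (par_snd x y 0 1 Hu). }
      split.
      * exists (hmul (Hdx f x y) (Rn x y)), (hmul (Hdy f x y) (Rn x y)). split; [exact Dx | exact Dy].
      * intros a b. unfold Hd at 1. rewrite (Hdx_spec _ _ _ _ Dx), (Hdy_spec _ _ _ _ Dy).
        rewrite (HR x y Hu a b), hopp_hopp. unfold Hd. apply alg_lin.
    + intros x y Hu. cbv zeta. change (hmul (hmul hi (hadd hone mu)) (hinv (hsub hone mu))) with (cc mu). rewrite (surjective_pairing (phi x y)) at 1.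
      unfold v_add, v_rmul, e_vec, psi_vec; simpl. f_equal.
      * rewrite <- (Brep x y Hu). symmetry. apply alg_rep; auto.
      * rewrite hmul_0l, hmul_1l, hadd_0l. apply Brep; auto.
Qed.
End Phi.

Lemma HD_locU_x (F G : R -> R -> H) x y v : U x y -> (forall x y, U x y -> F x y = G x y) ->
  HD (fun t => G t y) x v -> HD (fun t => F t y) x v.
Proof.
  intros Hu E D. destruct (open_line U x y HUo Hu) as [r [Hr [L1 L2]]].
  eapply HD_loc; [exact Hr | | exact D]. intros s Hs; symmetry; apply E; auto.
Qed.
Lemma HD_locU_y (F G : R -> R -> H) x y v : U x y -> (forall x y, U x y -> F x y = G x y) ->
  HD (fun t => G x t) y v -> HD (fun t => F x t) y v.
Proof.
  intros Hu E D. destruct (open_line U x y HUo Hu) as [r [Hr [L1 L2]]].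
  eapply HD_loc; [exact Hr | | exact D]. intros s Hs; symmetry; apply E; auto.
Qed.

Lemma bwd phi :
  ((exists n : H, forall x y, U x y -> phi x y = v_rmul e_vec n) \/
   (exists m : H, m <> hzero /\
    exists fs : R -> R -> H, conjugate_surface U f fs /\
    forall x y, U x y ->
      let c := hmul (hmul hi (hadd hone mu)) (hinv (hsub hone mu)) in
      let alpha := hsub (hopp (hmul (fs x y) m)) (hmul (hmul (f x y) m) c) in
      let beta := hadd (hmul (Rn x y) m) (hmul m c) in
      phi x y = v_add (v_rmul e_vec alpha) (v_rmul (psi_vec f x y) beta))) ->
  parallel U f Rn mu phi.
Proof.
  intros [[n Hn] | [m [_ [fs [Hconj Hrep]]]]] x y Hu a b.
  - assert (P1 : forall x y, U x y -> fst (phi x y) = hmul hone n) by (intros; rewrite Hn; auto).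
    assert (P2 : forall x y, U x y -> snd (phi x y) = hmul hzero n) by (intros; rewrite Hn; auto).
    assert (D1 : forall a b, Hd (fun x y => fst (phi x y)) x y a b = hzero).
    { apply Hd_zero.
      - apply Hdx_spec. eapply (HD_locU_x (fun x y => fst (phi x y)) (fun _ _ => hmul hone n)); auto. apply HD_const.
      - apply Hdy_spec. eapply (HD_locU_y (fun x y => fst (phi x y)) (fun _ _ => hmul hone n)); auto. apply HD_const. }
    assert (D2 : forall a b, Hd (fun x y => snd (phi x y)) x y a b = hzero).
    { apply Hd_zero.
      - apply Hdx_spec. eapply (HD_locU_x (fun x y => snd (phi x y)) (fun _ _ => hmul hzero n)); auto. apply HD_const.
      - apply Hdy_spec. eapply (HD_locU_y (fun x y => snd (phi x y)) (fun _ _ => hmul hzero n)); auto. apply HD_const. }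
    unfold v_zero. apply pair_eq.
    + rewrite dS_fst. unfold dphi; simpl. rewrite D1, P2, hmul_0l, Bf_00', hmul_0r, hadd_0r; auto.
    + rewrite dS_snd. unfold dphi; simpl. rewrite D2, P2, hmul_0l, Bf_00', hadd_0r; auto.
  - set (c := cc mu).
    assert (Rp : forall x y, U x y -> phi x y = (hadd (hsub (hopp (hmul (fs x y) m)) (hmul (hmul (f x y) m) c)) (hmul (f x y) (hadd (hmul (Rn x y) m) (hmul m c))),
                                             hadd (hmul (Rn x y) m) (hmul m c))).
    { intros x' y' Hu'. rewrite (Hrep x' y' Hu'). unfold v_add, v_rmul, e_vec, psi_vec; simpl.
      rewrite !hmul_1l, hmul_0l, hadd_0l. reflexivity. }
    destruct (Hconj x y Hu) as [[vx [vy [Dfx Dfy]]] Hcj].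
    destruct (HS_first U f x y Hfs Hu) as [Fx Fy].
    assert (Vx : Hdx fs x y = hmul (Hdx f x y) (Rn x y)).
    { pose proof (Hcj 1 0) as E. rewrite Hd_10, Hd_m01 in E. rewrite E, (Gfy x y Hu), hopp_hopp; auto. }
    assert (Vy : Hdy fs x y = hmul (Hdy f x y) (Rn x y)).
    { pose proof (Hcj 0 1) as E. rewrite Hd_01, Hd_m10 in E. rewrite E, hopp_hopp, <- (Gfx x y Hu); auto. }
    change (is_Hdx fs x y vx) with (HD (fun t => fs t y) x vx) in Dfx.
    change (is_Hdy fs x y vy) with (HD (fun t => fs x t) y vy) in Dfy.
    rewrite (Hdx_spec _ _ _ _ Dfx) in Vx. rewrite (Hdy_spec _ _ _ _ Dfy) in Vy.
    assert (D2x : Hdx (fun x y => snd (phi x y)) x y = hmul (Hdx Rn x y) m).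
    { apply Hdx_spec. eapply (HD_locU_x (fun x y => snd (phi x y)) (fun x y => hadd (hmul (Rn x y) m) (hmul m c))); auto.
      intros; rewrite Rp; auto. eapply HD_eqv. apply HD_add. apply HD_mulr. apply Rx; auto. apply HD_const.
      apply hadd_0r. }
    assert (D2y : Hdy (fun x y => snd (phi x y)) x y = hmul (Hdy Rn x y) m).
    { apply Hdy_spec. eapply (HD_locU_y (fun x y => snd (phi x y)) (fun x y => hadd (hmul (Rn x y) m) (hmul m c))); auto.
      intros; rewrite Rp; auto. eapply HD_eqv. apply HD_add. apply HD_mulr. apply Ry; auto. apply HD_const.
      apply hadd_0r. }
    assert (D1x : Hdx (fun x y => fst (phi x y)) x y = hmul (f x y) (hmul (Hdx Rn x y) m)).
    { apply Hdx_spec. eapply (HD_locU_x (fun x y => fst (phi x y)) (fun x y => hadd (hsub (hopp (hmul (fs x y) m)) (hmul (hmul (f x y) m) c)) (hmul (f x y) (hadd (hmul (Rn x y) m) (hmul m c))))); auto.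
      intros; rewrite Rp; auto. eapply HD_eqv.
      apply HD_add. apply HD_sub. apply HD_opp. apply HD_mulr. exact Dfx.
      apply HD_mulr. apply HD_mulr. exact Fx. apply HD_mul. exact Fx. apply HD_add. apply HD_mulr. apply Rx; auto.
      apply HD_const. apply alg_phi1; auto. }
    assert (D1y : Hdy (fun x y => fst (phi x y)) x y = hmul (f x y) (hmul (Hdy Rn x y) m)).
    { apply Hdy_spec. eapply (HD_locU_y (fun x y => fst (phi x y)) (fun x y => hadd (hsub (hopp (hmul (fs x y) m)) (hmul (hmul (f x y) m) c)) (hmul (f x y) (hadd (hmul (Rn x y) m) (hmul m c))))); auto.
      intros; rewrite Rp; auto. eapply HD_eqv.
      apply HD_add. apply HD_sub. apply HD_opp. apply HD_mulr. exact Dfy.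
      apply HD_mulr. apply HD_mulr. exact Fy. apply HD_mul. exact Fy. apply HD_add. apply HD_mulr. apply Ry; auto.
      apply HD_const. apply alg_phi1; auto. }
    assert (Sn : hadd (Hd (fun x y => snd (phi x y)) x y a b)
       (Bf (hmul (Hd Rn x y (- b) a) (snd (phi x y))) (hmul (Hd Rn x y a b) (snd (phi x y))) mu (hinv mu)) = hzero).
    { assert (E : Hd (fun x y => snd (phi x y)) x y a b = hmul (Hd Rn x y a b) m).
      { unfold Hd at 1. rewrite D2x, D2y. unfold Hd. apply alg_lin. }
      rewrite E, (rstar x y a b Hu), (Rp x y Hu). simpl.
      apply alg_bwd.
      - apply RR; auto.
      - apply rR; auto.
      - pose proof (Z1' mu Hmu Hmu0 Hmu1) as Z. unfold ss, tt in Z. exact Z.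
      - pose proof (Z2' mu Hmu Hmu0 Hmu1) as Z. unfold ss, tt in Z. exact Z. }
    unfold v_zero. apply pair_eq.
    + rewrite dS_fst. unfold dphi; simpl.
      assert (E : Hd (fun x y => fst (phi x y)) x y a b = hmul (f x y) (Hd (fun x y => snd (phi x y)) x y a b)).
      { unfold Hd. rewrite D1x, D1y, D2x, D2y. apply alg_lin2. }
      rewrite E. apply alg_fin. exact Sn.
    + rewrite dS_snd. unfold dphi; simpl. exact Sn.
Qed.
End Main.

Theorem mainTheorem5
  (U : R -> R -> Prop) (HUo : open2 U) (HUc : connected2 U)
  (f Rn : R -> R -> H)
  (Hf : conformal_immersion U f) (HR : right_normal U f Rn) (Hmin : minimal U f)
  (mu : H) (Hmu : is_complex mu) (Hmu0 : mu <> hzero) (Hmu1 : mu <> hone)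
  (phi : R -> R -> H2) (Hphi : section_smooth U phi) :
  parallel U f Rn mu phi <->
  ((exists n : H, forall x y, U x y -> phi x y = v_rmul e_vec n) \/
   (exists m : H, m <> hzero /\
    exists fs : R -> R -> H, conjugate_surface U f fs /\
    forall x y, U x y ->
      let c := hmul (hmul hi (hadd hone mu)) (hinv (hsub hone mu)) in
      let alpha := hsub (hopp (hmul (fs x y) m)) (hmul (hmul (f x y) m) c) in
      let beta := hadd (hmul (Rn x y) m) (hmul m c) in
      phi x y = v_add (v_rmul e_vec alpha) (v_rmul (psi_vec f x y) beta))).

Proof.
  destruct Hf as [Hfs Hc].
  assert (Hfx : forall x y, U x y -> Hdx f x y <> hzero) by (intros x y Hu; apply (Hc x y Hu)).
  split.
  - intros Hpar. exact (fwd U f Rn mu HUo HUc Hfs Hfx HR Hmin Hmu Hmu0 Hmu1 phi Hpar Hphi).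
  - intros Hr. exact (bwd U f Rn mu HUo Hfs Hfx HR Hmin Hmu Hmu0 Hmu1 phi Hr).
Qed.
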